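(* Let $d\geqslant1$, let $F$ be a finite abelian group and $G=\mathbb{Z}^d\times F$. Let $A$ be a nonempty subset of $\mathbb{Z}^d$ which has a minimal complement in $\mathbb{Z}^d$. Then for every nonempty subset $H\subseteq F$, the set $A\times H$ has a minimal complement in $G$.
   Context: A nonempty $M$ is a complement of $W$ in an abelian group $G$ if $W+M=G$; it is a minimal complement if no proper subset of $M$ is a complement of $W$. *)

(* Defs.v *)
From mathcomp Require Import all_boot all_algebra.
Set Implicit Arguments. Unset Strict Implicit. Unset Printing Implicit Defensive.
Import GRing.Theory.
Local Open Scope ring_scope.

Definition is_complement (G : zmodType) (W M : G -> Prop) : Prop :=
  (exists m, M m) /\ (forall g : G, exists w m, W w /\ M m /\ g = w + m).

Definition is_min_complement (G : zmodType) (W M : G -> Prop) : Prop :=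
  is_complement W M /\
  (forall M' : G -> Prop, (forall x, M' x -> M x) -> is_complement W M' ->
     forall x, M x -> M' x).

Definition has_min_complement (G : zmodType) (W : G -> Prop) : Prop :=
  exists M : G -> Prop, is_min_complement W M.

Definition setprod (T U : Type) (A : T -> Prop) (H : U -> Prop) : T * U -> Prop :=
  fun g => A g.1 /\ H g.2.

(* Main.v *)
Require Import Defs.
From mathcomp Require Import all_boot all_algebra.
From mathcomp Require Import boolp.
From Stdlib Require Import Classical.
Import GRing.Theory.
Local Open Scope ring_scope.

Lemma fin_min (F : finZmodType) (H : F -> Prop) :
  (exists h, H h) -> has_min_complement H.
Proof.
move=> [h0 Hh0].
suff K : forall n (N : F -> Prop),
    (#|[set x | `[< N x >]]| <= n)%N -> is_complement H N -> has_min_complement H.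
  apply: (K #|F| (fun _ => True)); first exact: max_card.
  split; first by exists 0.
  by move=> g; exists h0, (g - h0); split=> //; split=> //; rewrite addrC subrK.
elim=> [|n IH] N hc cN.
  case: cN => [[m Nm] _].
  have : m \in [set x | `[< N x >]] by rewrite inE; apply/asboolP.
  by move: hc; rewrite leqn0 cards_eq0 => /eqP ->; rewrite inE.
case: (classic (is_min_complement H N)) => [mN|nmN]; first by exists N.
have [M' [sub [cM' [x [Nx nM'x]]]]] : exists M', (forall x, M' x -> N x) /\
   is_complement H M' /\ exists x, N x /\ ~ M' x.
  apply: NNPP => C; apply: nmN; split=> // M' s c x Nx.
  by apply: NNPP => nx; apply: C; exists M'; split=> //; split=> //; exists x.
apply: (IH M') => //.
rewrite -ltnS; apply: leq_trans hc; apply: proper_card.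
apply/properP; split.
  by apply/subsetP => y; rewrite !inE => /asboolP /sub /asboolP.
exists x; rewrite !inE; first by apply/asboolP.
by apply/asboolP.
Qed.

Theorem lemma5p5 (d : nat) (F : finZmodType) (A : 'rV[int]_d -> Prop)
  (H : F -> Prop) :
  (1 <= d)%N ->
  (exists a, A a) ->
  has_min_complement A ->
  (exists h, H h) ->
  has_min_complement (G := ('rV[int]_d * F)%type) (setprod A H).
Proof.
move=> _ _ [M [[[m1 Mm1] cM] minM]] Hne.
have [N [[[n1 Nn1] cN] minN]] := @fin_min F H Hne.
exists (setprod M N); split.
  split; first by exists (m1, n1).
  move=> [z f]; have [a [m [Aa [Mm ->]]]] := cM z.
  have [h [n [Hh [Nn ->]]]] := cN f.
  by exists (a, h), (m, n).
move=> M' sub cM' [m0 n0] [Mm0 Nn0].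
apply: NNPP => nM'.
have [z Hz] : exists z, forall a m, A a -> M m -> z = a + m -> m = m0.
  apply: NNPP => C.
  have cM0 : is_complement A (fun m => M m /\ m <> m0).
    split.
      apply: NNPP => E; apply: C; exists 0 => a m _ Mm _.
      by apply: NNPP => ne; apply: E; exists m.
    move=> g; apply: NNPP => E; apply: C; exists g => a m Aa Mm eg.
    by apply: NNPP => ne; apply: E; exists a, m.
  by have [] := minM _ (fun m (hm : M m /\ m <> m0) => proj1 hm) cM0 m0 Mm0.
pose N' := fun n => M' (m0, n).
have cN' : is_complement H N'.
  have key : forall f, exists h n, H h /\ N' n /\ f = h + n.
    move=> f; have [[a h] [[m n] [[Aa Hh] [M'mn ef]]]] := cM'.2 (z, f).
    case: ef => ez ef.
    have [Mm _] := sub _ M'mn.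
    have em := Hz a m Aa Mm ez; subst m.
    by exists h, n.
  split=> //; have [h [n [_ [Nn _]]]] := key 0; by exists n.
apply: nM'; apply: (minN N') => // n N'n.
by have [] := sub _ N'n.
Qed.
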